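(* Let $G$ be a matrix with entries from a field $\mathbb{F}$, with row index set $S$ and column index set $T$. Suppose $S=S_1\cup\cdots\cup S_m$ and $T=T_1\cup\cdots\cup T_n$ are partitions into pairwise disjoint sets. Let $s_1,\dots,s_m,t_1,\dots,t_n$ be non-negative integers with $\sum_{i=1}^m s_i=\sum_{j=1}^n t_j=R$. Then there exist subsets $\mathbf{s}_1\subseteq S_1,\dots,\mathbf{s}_m\subseteq S_m$ and $\mathbf{t}_1\subseteq T_1,\dots,\mathbf{t}_n\subseteq T_n$ with $|\mathbf{s}_i|=s_i$ for all $i$ and $|\mathbf{t}_j|=t_j$ for all $j$ such that the $R\times R$ submatrix $G\big(\bigcup_{i=1}^m\mathbf{s}_i,\bigcup_{j=1}^n\mathbf{t}_j\big)$ is nonsingular, if and only if for every $I\subseteq\{1,\dots,m\}$ and every $K\subseteq\{1,\dots,n\}$, \[ \operatorname{rank}\Big(G\big(\textstyle\bigcup_{i\in I}S_i,\bigcup_{k\in K}T_k\big)\Big)\ \ge\ \sum_{i\in I}s_i+\sum_{k\in K}t_k-R . \]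
   Context: For $\mathbf{s}\subseteq S$ and $\mathbf{t}\subseteq T$, $G(\mathbf{s},\mathbf{t})$ denotes the submatrix of $G$ formed by the rows with indices in $\mathbf{s}$ and the columns with indices in $\mathbf{t}$ (the rank of a submatrix with no rows or no columns is $0$). *)

(* Defs.v *)
From HB Require Import structures.
From mathcomp Require Import all_boot all_order all_algebra.
Set Implicit Arguments. Unset Strict Implicit. Unset Printing Implicit Defensive.
Import GRing.Theory.
Local Open Scope ring_scope.

(* The submatrix G(s, t): rows indexed by s, columns by t (in the enumeration
   order of the finite types; row/column order does not affect rank or
   nonsingularity). *)
Definition subG (F : fieldType) (S T : finType) (G : S -> T -> F)
  (s : {set S}) (t : {set T}) : 'M[F]_(#|s|, #|t|) :=
  \matrix_(i < #|s|, j < #|t|) G (enum_val i) (enum_val j).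

Definition nonsingular_sub (F : fieldType) (S T : finType) (G : S -> T -> F)
  (s : {set S}) (t : {set T}) : Prop :=
  exists e : #|t| = #|s|, castmx (erefl #|s|, e) (subG G s t) \in unitmx.

(* Main.v *)
Require Import Defs.
From HB Require Import structures.
From mathcomp Require Import all_boot all_order all_algebra.
From Stdlib Require Import Lia.
Set Implicit Arguments. Unset Strict Implicit. Unset Printing Implicit Defensive.

Ltac nlia := intros; repeat match goal with H : is_true (_ <= _) |- _ => move/leP: H => ? end;
  repeat match goal with H : context[addn] |- _ => rewrite -plusE in H
  | H : context[subn] |- _ => rewrite -minusE in H | H : context[muln] |- _ => rewrite -multE in H end;
  try apply/leP; rewrite -?plusE -?minusE -?multE; lia.

Definition rankfun (E : finType) (r : {set E} -> nat) :=
  [/\ forall X Y : {set E}, X \subset Y -> r X <= r Y,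
      forall X Y : {set E}, r (X :|: Y) + r (X :&: Y) <= r X + r Y &
      forall X : {set E}, r X <= #|X| ].

Lemma submodS (E : finType) (r : {set E} -> nat) (A B X Y : {set E}) : rankfun r ->
  A \subset X :|: Y -> B \subset X :&: Y -> r A + r B <= r X + r Y.
Proof.
case=> mono sub _ hA hB; apply: leq_trans (sub X Y).
by apply: leq_add; apply: mono.
Qed.

Lemma indep_sub (E : finType) (r : {set E} -> nat) (X Y : {set E}) : rankfun r ->
  r X = #|X| -> Y \subset X -> r Y = #|Y|.
Proof.
move=> hr rX sYX; have [mono _ le] := hr.
have h := @submodS _ r X set0 Y (X :\: Y) hr.
have h1 : X \subset Y :|: X :\: Y.
  by apply/subsetP=> x xX; rewrite !inE xX; case: (x \in Y).
have := h h1 (sub0set _); have := le (X :\: Y); have := le Y.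
have := cardsID Y X; rewrite (setIidPr sYX) => hc.
move=> a b c; nlia.
Qed.

Lemma closure_rank (E : finType) (r : {set E} -> nat) (P Z : {set E}) : rankfun r ->
  (forall e, e \in P -> r (e |: Z) <= r Z) -> r (P :|: Z) <= r Z.
Proof.
move=> hr hP; have [mono _ _] := hr.
suff: forall n (Y : {set E}), #|Y| = n -> Y \subset P -> r (Y :|: Z) <= r Z by apply=> //.
elim=> [|n IH] Y cY sYP.
  by move/eqP: cY; rewrite cards_eq0 => /eqP ->; rewrite set0U.
have: (0 < #|Y|) by rewrite cY.
case/card_gt0P=> e eY.
have eP : e \in P by apply: (subsetP sYP).
have h1 := IH (Y :\ e).
have h2 : #|Y :\ e| = n by move: (cardsD1 e Y); rewrite eY cY; case.
have h3 : Y :\ e \subset P by apply: subset_trans sYP; apply: subsetDl.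
have h4 := h1 h2 h3.
have h5 := @submodS _ r (Y :|: Z) Z (e |: Z) ((Y :\ e) :|: Z) hr.
have h6 : Y :|: Z \subset (e |: Z) :|: ((Y :\ e) :|: Z).
  by apply/subsetP=> x; rewrite !inE; case: (x == e); case: (x \in Y); case: (x \in Z).
have h7 : Z \subset (e |: Z) :&: ((Y :\ e) :|: Z).
  by apply/subsetP=> x; rewrite !inE => ->; rewrite !orbT.
have := h5 h6 h7; have := hP e eP. move=> a b. clear h1 h5 h6 h7 IH hP. nlia.
Qed.

Lemma setU1_id (T : finType) (a : T) (A : {set T}) : a \in A -> a |: A = A.
Proof. by move=> aA; apply/setUidPr; rewrite sub1set. Qed.

Lemma sum_UI (K : finType) (c : K -> nat) (J1 J2 : {set K}) :
  \sum_(k in J1 :|: J2) c k + \sum_(k in J1 :&: J2) c k =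
  \sum_(k in J1) c k + \sum_(k in J2) c k.
Proof.
rewrite (@big_setID _ _ _ _ (J1 :|: J2) J1) (@big_setID _ _ _ _ J2 J1).
have -> : (J1 :|: J2) :&: J1 = J1 by apply/setP=> x; rewrite !inE; case: (x \in J1); case: (x \in J2).
have -> : (J1 :|: J2) :\: J1 = J2 :\: J1 by apply/setP=> x; rewrite !inE; case: (x \in J1); case: (x \in J2).
have -> : J2 :&: J1 = J1 :&: J2 by rewrite setIC.
by rewrite addnAC addnA.
Qed.

Lemma rado (E K : finType) (part : E -> K) (r : {set E} -> nat) (c : K -> nat) :
  rankfun r ->
  (forall J : {set K}, \sum_(k in J) c k <= r [set x | part x \in J]) ->
  exists X : {set E}, r X = #|X| /\ forall k, #|[set x in X | part x == k]| = c k.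
Proof.
move: {2}(\sum_k c k) (erefl (\sum_k c k)) => N.
elim: N r c => [|N IH] r c hN hr hc.
  exists set0; have [_ _ le] := hr; split.
    by apply/eqP; rewrite cards0 -leqn0; apply: (leq_trans (le _)); rewrite cards0.
  move=> k.
  have := sum_nat_eq0 xpredT c; rewrite hN eqxx => /esym/forall_inP/(_ k isT)/eqP->.
  by apply/eqP; rewrite cards_eq0; apply/eqP/setP=> x; rewrite !inE.
have [k ck] : exists k, 0 < c k.
  apply/existsP; apply: contraT; rewrite negb_exists => /forallP h0.
  have : \sum_k c k == 0.
    by rewrite sum_nat_eq0; apply/forallP=> k; have := h0 k; rewrite lt0n negbK.
  by rewrite hN.
pose U (J : {set K}) := [set x | part x \in J].
have {}hc : forall J : {set K}, \sum_(j in J) c j <= r (U J) := hc.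
have [mono sub le] := hr.
pose tight (J : {set K}) := (k \notin J) && (r (U J) <= \sum_(j in J) c j).
have t0 : tight set0.
  rewrite /tight inE /= big_set0; apply: leq_trans (le _) _.
  by rewrite leqn0 cards_eq0; apply/eqP/setP=> x; rewrite !inE.
case: (@arg_maxnP _ set0 tight (fun J => #|J|) t0) => Js tJs maxJs.
have tU : forall J1 J2, tight J1 -> tight J2 -> tight (J1 :|: J2).
  move=> J1 J2 /andP [k1 t1] /andP [k2 t2]; apply/andP; split.
    by rewrite inE negb_or k1 k2.
  have h := @submodS _ r (U (J1 :|: J2)) (U (J1 :&: J2)) (U J1) (U J2) hr.
  have s1 : U (J1 :|: J2) \subset U J1 :|: U J2 by apply/subsetP=> x; rewrite !inE.
  have s2 : U (J1 :&: J2) \subset U J1 :&: U J2 by apply/subsetP=> x; rewrite !inE.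
  have := h s1 s2; have := hc (J1 :&: J2); have := sum_UI c J1 J2.
  clear h s1 s2; move: t1 t2; nlia.
have JsJ : forall J, tight J -> J \subset Js.
  move=> J tJ; have hcard := maxJs (J :|: Js) (tU _ _ tJ tJs).
  have : Js == J :|: Js by rewrite eqEcard subsetUr; exact: hcard.
  by move/eqP->; apply: subsetUl.
have [e [pe he]] : exists e, part e = k /\ r (U Js) < r (e |: U Js).
  case: (boolP [exists e, (part e == k) && (r (U Js) < r (e |: U Js))]) => [/existsP [e /andP [/eqP pe he]] | /existsPn hn]; first by exists e.
  exfalso.
  have h := @closure_rank _ r (U [set k]) (U Js) hr.
  have h' : r (U [set k] :|: U Js) <= r (U Js).
    apply: h => x; rewrite !inE => /eqP px; have := hn x; rewrite px eqxx /=.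
    by rewrite -leqNgt.
  have eq1 : U [set k] :|: U Js = U (k |: Js) by apply/setP=> x; rewrite !inE.
  rewrite eq1 in h'.
  have := hc (k |: Js); rewrite big_setU1 /=; last by case/andP: tJs.
  case/andP: tJs => _ tJs'. clear h hn eq1. move: ck h' tJs'. nlia.
have e1 : 1 <= r [set e].
  have := @submodS _ r (e |: U Js) set0 [set e] (U Js) hr (subxx _) (sub0set _).
  move: he; nlia.
have re : forall X, 1 <= r (e |: X).
  by move=> X; apply: leq_trans e1 (mono _ _ _); apply/subsetP=> x; rewrite !inE => ->.
pose r' X := r (e |: X) - 1.
pose c' j := if j == k then (c k).-1 else c j.
have hr' : rankfun r'.
  split.
  - move=> X Y sXY; rewrite /r' leq_sub2r // mono //.
    by apply/subsetP=> x; rewrite !inE; case: (x == e) => //= /(subsetP sXY).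
  - move=> X Y; rewrite /r'.
    have := @submodS _ r (e |: (X :|: Y)) (e |: (X :&: Y)) (e |: X) (e |: Y) hr.
    move=> h.
    have s1 : e |: (X :|: Y) \subset (e |: X) :|: (e |: Y).
      by apply/subsetP=> x; rewrite !inE; case: (x == e); case: (x \in X).
    have s2 : e |: (X :&: Y) \subset (e |: X) :&: (e |: Y).
      by apply/subsetP=> x; rewrite !inE; case: (x == e); case: (x \in X).
    have := h s1 s2.
    have := re (X :|: Y); have := re (X :&: Y); have := re X; have := re Y.
    clear h s1 s2; nlia.
  - move=> X; rewrite /r'; have := le (e |: X); rewrite cardsU1.
    have := leq_b1 (e \notin X); nlia.
have hN' : \sum_j c' j = N.
  move: hN; rewrite (bigD1 k) //= => hN.
  rewrite (bigD1 k) //= /c' eqxx (eq_bigr c) => [|j /negbTE ->] //.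
  move: ck hN; rewrite -subn1; nlia.
have hc' : forall J : {set K}, \sum_(j in J) c' j <= r' (U J).
  move=> J; case: (boolP (k \in J)) => kJ.
  - have eU : e \in U J by rewrite inE pe.
    rewrite /r' (setU1_id eU) (big_setD1 k kJ) /= /c' eqxx.
    rewrite (eq_bigr c) => [|j]; last by rewrite !inE => /andP [/negbTE -> _].
    have := hc J; rewrite (big_setD1 k kJ) /=.
    move: ck; rewrite -subn1; nlia.
  - rewrite (eq_bigr c) => [|j jJ]; last first.
      rewrite /c'; case: (eqVneq j k) => [ejk|//]; move: jJ; by rewrite ejk (negbTE kJ).
    case: (boolP (tight J)) => tJ.
    + have sJ := JsJ J tJ.
      have h := @submodS _ r (e |: U Js) (U J) (e |: U J) (U Js) hr.
      have s1 : e |: U Js \subset (e |: U J) :|: U Js.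
        by apply/subsetP=> x; rewrite !inE; case: (x == e) => //= ->; rewrite orbT.
      have s2 : U J \subset (e |: U J) :&: U Js.
        by apply/subsetP=> x; rewrite !inE => xJ; rewrite xJ orbT (subsetP sJ).
      have := h s1 s2; have := hc J; rewrite /r'; clear h s1 s2; move: he; nlia.
    + move: tJ; rewrite /tight kJ /= -ltnNge => tJ.
      have : r (U J) <= r (e |: U J) by apply: mono; apply/subsetP=> x; rewrite !inE => ->; rewrite orbT.
      rewrite /r'; move: tJ; nlia.
have [X' [rX' cX']] := IH r' c' hN' hr' hc'.
have eX' : e \notin X'.
  apply/negP => eX; move: rX'; rewrite /r' (setU1_id eX).
  have := le X'; have : 0 < #|X'| by apply/card_gt0P; exists e.
  nlia.
exists (e |: X'); split.
  move: rX'; rewrite /r'; have := re X'; rewrite cardsU1 eX' /=; nlia.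
move=> j; have := cX' j; rewrite /c'; case: (eqVneq j k) => [->|njk].
  have -> : [set x in e |: X' | part x == k] = e |: [set x in X' | part x == k].
    by apply/setP=> x; rewrite !inE; case: (eqVneq x e) => [->|]; rewrite ?pe ?eqxx //=.
  by rewrite cardsU1 inE (negbTE eX') /= => ->; rewrite add1n prednK.
have -> : [set x in e |: X' | part x == j] = [set x in X' | part x == j] => //.
apply/setP=> x; rewrite !inE; case: (eqVneq x e) => [->|] //=.
by rewrite pe eq_sym (negbTE njk) (negbTE eX').
Qed.


Import GRing.Theory.
Local Open Scope ring_scope.

Lemma rank_rows (F : fieldType) p n (M : 'M[F]_(p, n)) :
  \rank (\sum_(i < p) <<row i M>>)%MS = \rank M.
Proof.
apply/eqmx_rank/andP; split.
  by apply/sumsmx_subP=> i _; rewrite genmxE row_sub.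
by apply/row_subP=> i; apply: (sumsmx_sup i) => //; rewrite genmxE.
Qed.

Lemma rank_sum_le (F : fieldType) (I : finType) n (X : {set I}) (v : I -> 'rV[F]_n) :
  (\rank (\sum_(i in X) <<v i>>)%MS <= #|X|)%N.
Proof.
rewrite -sum1_card.
apply: (big_ind2 (fun (M : 'M[F]_n) (k : nat) => \rank M <= k)%N).
- by rewrite mxrank0.
- move=> A a B b hA hB; apply: leq_trans (mxrank_adds_leqif A B) _.
  exact: leq_add.
- by move=> i _; rewrite mxrank_gen rank_leq_row.
Qed.

Definition vrow (F : fieldType) (S T : finType) (G : S -> T -> F) (x : S + T) : 'rV[F]_#|T| :=
  match x with inl i => \row_j G i (enum_val j) | inr j => delta_mx 0 (enum_rank j) end.

Definition rk (F : fieldType) (S T : finType) (G : S -> T -> F) (X : {set S + T}) : nat :=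
  \rank (\sum_(x in X) <<vrow G x>>)%MS.

Lemma rk_rankfun (F : fieldType) (S T : finType) (G : S -> T -> F) : rankfun (rk G).
Proof.
split.
- move=> X Y sXY; apply: mxrankS; apply/sumsmx_subP => x xX.
  exact: (sumsmx_sup x) (subsetP sXY x xX) (submx_refl _).
- move=> X Y; rewrite /rk.
  set sX := (\sum_(x in X) <<vrow G x>>)%MS; set sY := (\sum_(x in Y) <<vrow G x>>)%MS.
  apply: leq_trans (_ : _ <= \rank (sX + sY) + \rank (sX :&: sY))%N _; last by rewrite mxrank_sum_cap.
  apply: leq_add; apply: mxrankS.
    apply/sumsmx_subP=> x; rewrite inE => /orP [xX|xY].
      by apply: submx_trans (addsmxSl _ _); apply: (sumsmx_sup x).
    by apply: submx_trans (addsmxSr _ _); apply: (sumsmx_sup x).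
  rewrite sub_capmx; apply/andP; split; apply/sumsmx_subP => x; rewrite inE => /andP [xX xY].
    exact: (sumsmx_sup x).
  exact: (sumsmx_sup x).
- move=> X; exact: rank_sum_le.
Qed.

Lemma rk_split (F : fieldType) (S T : finType) (G : S -> T -> F)
  (X : {set S + T}) (A : {set S}) (B : {set T}) :
  (forall i, (inl i \in X) = (i \in A)) -> (forall j, (inr j \in X) = (j \notin B)) ->
  rk G X = (\rank (subG G A B) + #|~: B|)%N.
Proof.
move=> hA hB; rewrite /rk.
set W := (\sum_(x in X) <<vrow G x>>)%MS.
pose Q : 'M[F]_(#|B|, #|T|) := \matrix_(b < #|B|) (delta_mx 0 (enum_rank (enum_val b)) : 'rV_#|T|).
have f1 : forall j : T, j \notin B -> (delta_mx 0 (enum_rank j) : 'rV[F]_#|T|) *m Q^T = 0.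
  move=> j jB; apply/matrixP => a b; rewrite ord1 -rowE !mxE.
  rewrite (inj_eq enum_rank_inj); case: (eqVneq j (enum_val b)) => [ejb|]; last by rewrite andbF.
  by move: jB; rewrite ejb enum_valP.
have f2 : forall i : S, \row_j G i (enum_val j) *m Q^T = \row_b G i (enum_val b).
  move=> i; apply/matrixP => a0 b; rewrite ord1 !mxE.
  rewrite (bigD1 (enum_rank (enum_val b))) //= big1 => [|l nl].
    by rewrite !mxE enum_rankK !eqxx /= mulr1 addr0.
  by rewrite !mxE (negbTE nl) andbF mulr0.
have f3 : \rank (W *m Q^T) = \rank (subG G A B).
  apply/eqmx_rank/andP; split.
    have eW : (W *m Q^T :=: \sum_(x in X) <<<<vrow G x>> *m Q^T>>)%MS by apply: sumsmxMr_gen.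
    rewrite eW; apply/sumsmx_subP => x xX.
    rewrite genmxE (eqmxMr _ (genmxE _)).
    case: x xX => [i|j] xX /=.
      have iA : i \in A by rewrite -hA.
      have -> : \row_j G i (enum_val j) *m Q^T = row (enum_rank_in iA i) (subG G A B).
        by rewrite f2; apply/rowP => b; rewrite !mxE enum_rankK_in.
      exact: row_sub.
    have jB : j \notin B by rewrite -hB.
    by rewrite f1 // sub0mx.
  apply/row_subP => a.
  have -> : row a (subG G A B) = \row_j G (enum_val a) (enum_val j) *m Q^T.
    by rewrite f2; apply/rowP => b; rewrite !mxE.
  apply: submxMr; apply: (sumsmx_sup (inl (enum_val a))); first by rewrite hA enum_valP.
  by rewrite genmxE.
pose EB := (\sum_(j in B) <<(delta_mx 0 (enum_rank j) : 'rV[F]_#|T|)>>)%MS.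
pose EC := (\sum_(j in ~: B) <<(delta_mx 0 (enum_rank j) : 'rV[F]_#|T|)>>)%MS.
have g1 : (\rank EB <= #|B|)%N by apply: rank_sum_le.
have g1' : (\rank EC <= #|~: B|)%N by apply: rank_sum_le.
have g2 : (#|T| <= \rank EB + \rank EC)%N.
  have s1 : ((1%:M : 'M[F]_#|T|) <= EB + EC)%MS.
    apply/row_subP => l; rewrite row1; case: (boolP (enum_val l \in B)) => lB.
      apply: submx_trans (addsmxSl _ _); apply: (sumsmx_sup (enum_val l)) => //.
      by rewrite genmxE enum_valK.
    apply: submx_trans (addsmxSr _ _); apply: (sumsmx_sup (enum_val l)); first by rewrite inE.
    by rewrite genmxE enum_valK.
  have := mxrankS s1; rewrite mxrank1 => h; apply: leq_trans h (mxrank_adds_leqif _ _).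
have g3 : \rank Q = \rank EB.
  rewrite -[in LHS]rank_rows /EB [in RHS]big_enum_val; apply: congr1; apply: eq_bigr => b _.
  by rewrite rowK.
have cB := cardsC B.
have g5 : (\rank (W :&: kermx Q^T) <= #|~: B|)%N.
  apply: leq_trans (mxrankS (capmxSr _ _)) _; rewrite mxrank_ker mxrank_tr g3.
  move: g1 g1' g2 cB; nlia.
have g6 : (EC <= W :&: kermx Q^T)%MS.
  rewrite sub_capmx; apply/andP; split; apply/sumsmx_subP => j; rewrite inE => jB.
    by apply: (sumsmx_sup (inr j)); first by rewrite hB.
  by rewrite genmxE; apply/sub_kermxP; exact: f1.
have := mxrank_mul_ker W Q^T; rewrite f3.
have := mxrankS g6.
move: g1 g1' g2 cB g5; nlia.
Qed.


Local Close Scope ring_scope.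

Lemma card_part_in (I K : finType) (f : I -> K) (Y : {set I}) (P : {set K}) :
  #|[set x in Y | f x \in P]| = \sum_(k in P) #|[set x in Y | f x == k]|.
Proof.
rewrite -sum1_card (partition_big f (fun k => k \in P)) => [|x]; last by rewrite inE => /andP[].
apply: eq_bigr => k kP; rewrite -sum1_card; apply: eq_bigl => x; rewrite !inE.
by case: eqP => [->|]; rewrite ?kP ?andbT ?andbF.
Qed.

Lemma card_sum (S T : finType) (Y : {set S + T}) :
  #|Y| = (#|[set i | inl i \in Y]| + #|[set j | inr j \in Y]|)%N.
Proof.
rewrite -!sum1_card big_sumType /=; congr (_ + _)%N; apply: eq_bigl => x; by rewrite inE.
Qed.

Lemma rank_castmx (F : fieldType) m n m' n' (e : (m = m') * (n = n')) (M : 'M[F]_(m, n)) :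
  \rank (castmx e M) = \rank M.
Proof. case: e => e1 e2; subst m' n'; by rewrite castmx_id. Qed.

Unset Implicit Arguments.

Theorem theorem1 (F : fieldType) (S T : finType) (G : S -> T -> F)
  (m n : nat) (Sb : 'I_m -> {set S}) (Tb : 'I_n -> {set T})
  (hSdisj : forall i j : 'I_m, i != j -> [disjoint Sb i & Sb j])
  (hScov : \bigcup_(i < m) Sb i = [set: S])
  (hTdisj : forall j k : 'I_n, j != k -> [disjoint Tb j & Tb k])
  (hTcov : \bigcup_(j < n) Tb j = [set: T])
  (sz : 'I_m -> nat) (tz : 'I_n -> nat) (R : nat)
  (hs : (\sum_(i < m) sz i)%N = R) (ht : (\sum_(j < n) tz j)%N = R) :
  (exists (ss : 'I_m -> {set S}) (tt : 'I_n -> {set T}),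
      (forall i, ss i \subset Sb i /\ #|ss i| = sz i) /\
      (forall j, tt j \subset Tb j /\ #|tt j| = tz j) /\
      nonsingular_sub G (\bigcup_(i < m) ss i) (\bigcup_(j < n) tt j))
  <->
  (forall (I : {set 'I_m}) (K : {set 'I_n}),
      (\sum_(i in I) sz i + \sum_(k in K) tz k - R <=
       mxrank (subG G (\bigcup_(i in I) Sb i) (\bigcup_(k in K) Tb k)))%N).
Proof.
have exS : forall i : S, exists k : 'I_m, i \in Sb k.
  move=> i; have : i \in \bigcup_(k < m) Sb k by rewrite hScov inE.
  by case/bigcupP => k _ ik; exists k.
have exT : forall j : T, exists k : 'I_n, j \in Tb k.
  move=> j; have : j \in \bigcup_(k < n) Tb k by rewrite hTcov inE.
  by case/bigcupP => k _ jk; exists k.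
pose idxS i := xchoose (exS i).
pose idxT j := xchoose (exT j).
have memS : forall i k, (i \in Sb k) = (idxS i == k).
  move=> i k; apply/idP/eqP => [ik|<-]; last exact: xchooseP (exS i).
  apply/eqP; apply: contraT => nk.
  by rewrite (disjointFr (hSdisj _ _ nk) (xchooseP (exS i))) in ik.
have memT : forall j k, (j \in Tb k) = (idxT j == k).
  move=> j k; apply/idP/eqP => [jk|<-]; last exact: xchooseP (exT j).
  apply/eqP; apply: contraT => nk.
  by rewrite (disjointFr (hTdisj _ _ nk) (xchooseP (exT j))) in jk.
pose part (x : S + T) : ('I_m + 'I_n)%type :=
  match x with inl i => inl (idxS i) | inr j => inr (idxT j) end.
pose c (k : ('I_m + 'I_n)%type) : nat :=
  match k with inl a => sz a | inr b => (#|Tb b| - tz b)%N end.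
pose U (J : {set ('I_m + 'I_n)}) := [set x | part x \in J].
pose mkJ (I : {set 'I_m}) (K : {set 'I_n}) : {set ('I_m + 'I_n)} :=
  [set k | match k with inl a => a \in I | inr b => b \notin K end].
have inBS : forall (I : {set 'I_m}) i, (i \in \bigcup_(a in I) Sb a) = (idxS i \in I).
  move=> I i; apply/bigcupP/idP => [[a aI]|iI]; first by rewrite memS => /eqP ->.
  by exists (idxS i) => //; rewrite memS.
have inBT : forall (K : {set 'I_n}) j, (j \in \bigcup_(b in K) Tb b) = (idxT j \in K).
  move=> K j; apply/bigcupP/idP => [[b bK]|jK]; first by rewrite memT => /eqP ->.
  by exists (idxT j) => //; rewrite memT.
have rkU : forall I K, rk G (U (mkJ I K)) =
    (\rank (subG G (\bigcup_(i in I) Sb i) (\bigcup_(k in K) Tb k)) +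
     #|~: \bigcup_(k in K) Tb k|)%N.
  move=> I K; apply: rk_split => [i|j]; by rewrite !inE /= ?inBS ?inBT.
have sumJ : forall I K, (\sum_(k in mkJ I K) c k =
    \sum_(a in I) sz a + \sum_(b in ~: K) (#|Tb b| - tz b))%N.
  move=> I K; rewrite big_sumType; congr (_ + _)%N; apply: eq_bigl => a; by rewrite !inE.
have cardT : forall P : {set 'I_n}, #|[set j | idxT j \in P]| = (\sum_(b in P) #|Tb b|)%N.
  move=> P; have := card_part_in idxT setT P.
  have -> : [set x in setT | idxT x \in P] = [set j | idxT j \in P] by apply/setP=> j; rewrite !inE.
  move=> ->; apply: eq_bigr => b _; apply: eq_card => j; by rewrite !inE memT.
have cardC : forall K : {set 'I_n}, #|~: \bigcup_(k in K) Tb k| = (\sum_(b in ~: K) #|Tb b|)%N.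
  move=> K; rewrite -cardT; apply: eq_card => j; by rewrite !inE inBT.
have splitR : forall K : {set 'I_n}, R = (\sum_(b in K) tz b + \sum_(b in ~: K) tz b)%N.
  move=> K; rewrite -ht (bigID (fun b => b \in K)) /=; congr (_ + _)%N; apply: eq_bigl => b; by rewrite inE.
have hr := rk_rankfun G; have [mono _ _] := hr.
split.
  case=> ss [tt [hss [htt [e hu]]]] I K.
  set s := \bigcup_(i < m) ss i; set t := \bigcup_(j < n) tt j.
  have ms : forall i, (i \in s) = (i \in ss (idxS i)).
    move=> i; apply/bigcupP/idP => [[a _ ia]|ia]; last by exists (idxS i).
    by have := subsetP (hss a).1 i ia; rewrite memS => /eqP ->.
  have mt : forall j, (j \in t) = (j \in tt (idxT j)).
    move=> j; apply/bigcupP/idP => [[a _ ja]|ja]; last by exists (idxT j).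
    by have := subsetP (htt a).1 j ja; rewrite memT => /eqP ->.
  pose X := [set x : S + T | match x with inl i => i \in s | inr j => j \notin t end].
  have rX : rk G X = (#|s| + #|~: t|)%N.
    rewrite (@rk_split _ _ _ _ _ s t) => [|i|j]; try by rewrite inE.
    by rewrite -(rank_castmx (erefl #|s|, e)) (mxrank_unit hu).
  have cX : #|X| = (#|s| + #|~: t|)%N.
    rewrite card_sum; congr (_ + _)%N; apply: eq_card => x; by rewrite !inE.
  set Y := [set x in X | part x \in mkJ I K].
  have rY : rk G Y = #|Y|.
    apply: (indep_sub hr (X := X)); first by rewrite rX cX.
    by apply/subsetP => x; rewrite inE => /andP [].
  have hY : (#|Y| <= rk G (U (mkJ I K)))%N.
    by rewrite -rY; apply: mono; apply/subsetP => x; rewrite !inE => /andP [].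
  rewrite rkU cardC in hY.
  have cY1 : #|[set i | inl i \in Y]| = (\sum_(a in I) sz a)%N.
    have -> : [set i | inl i \in Y] = [set i in s | idxS i \in I].
      by apply/setP => i; rewrite !inE.
    rewrite card_part_in; apply: eq_bigr => a _; rewrite -(hss a).2.
    apply: eq_card => i; rewrite !inE ms; case: eqP => [->|]; first by rewrite andbT.
    move=> nia; rewrite andbF; apply/esym/negP => ia.
    by have := subsetP (hss a).1 i ia; rewrite memS => /eqP.
  have cY2 : (#|[set j | inr j \in Y]| + \sum_(b in ~: K) tz b)%N = (\sum_(b in ~: K) #|Tb b|)%N.
    rewrite -cardT.
    have -> : (\sum_(b in ~: K) tz b)%N = #|[set j in t | idxT j \in ~: K]|.
      rewrite card_part_in; apply: eq_bigr => b _; rewrite -(htt b).2.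
      apply: eq_card => j; rewrite !inE mt. case: eqP => [->|]; first by rewrite andbT.
      move=> njb; rewrite andbF; apply/negP => jb.
      by have := subsetP (htt b).1 j jb; rewrite memT => /eqP.
    rewrite -(cardsID t [set j | idxT j \in ~: K]) addnC; congr (_ + _)%N.
      by apply: eq_card => j; rewrite !inE andbC.
    by apply: eq_card => j; rewrite !inE.
  move: hY; rewrite card_sum cY1 (splitR K).
  move: cY2; set a1 := (\sum_(i in I) sz i)%N; set t1 := (\sum_(k in K) tz k)%N; set t2 := (\sum_(b in ~: K) tz b)%N.
  set y := #|[set j | inr j \in Y]|; set N2 := (\sum_(b in ~: K) #|Tb b|)%N; set rr := \rank _. nlia.
move=> hcond.
have hR : (\sum_(i in [set: 'I_m]) sz i)%N = R by rewrite -hs; apply: eq_bigl => i; rewrite inE.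
have tzle : forall b, (tz b <= #|Tb b|)%N.
  move=> b; have := hcond setT [set b]; rewrite big_set1 hR.
  have -> : \bigcup_(k in [set b]) Tb k = Tb b by rewrite big_set1.
  have := rank_leq_col (subG G (\bigcup_(i in setT) Sb i) (Tb b)).
  set rr := \rank _; nlia.
have hJ : forall J : {set ('I_m + 'I_n)}, (\sum_(k in J) c k <= rk G (U J))%N.
  move=> J; pose I := [set a | inl a \in J]; pose K := [set b | inr b \notin J].
  have -> : J = mkJ I K by apply/setP => [[a|b]]; rewrite !inE ?negbK.
  rewrite rkU sumJ cardC.
  have e1 : (\sum_(b in ~: K) (#|Tb b| - tz b) + \sum_(b in ~: K) tz b = \sum_(b in ~: K) #|Tb b|)%N.
    by rewrite -big_split /=; apply: eq_bigr => b _; rewrite subnK.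
  have := hcond I K; move: e1; rewrite (splitR K).
  set a1 := (\sum_(i in I) sz i)%N; set t1 := (\sum_(k in K) tz k)%N; set t2 := (\sum_(b in ~: K) tz b)%N.
  set d := (\sum_(b in ~: K) (#|Tb b| - tz b))%N; set N2 := (\sum_(b in ~: K) #|Tb b|)%N; set rr := \rank _.
  nlia.
have [X [rX cX]] := rado hr hJ.
pose ss a := [set i | (inl i \in X) && (idxS i == a)].
pose tt b := [set j | (inr j \notin X) && (idxT j == b)].
have css : forall a, #|ss a| = sz a.
  move=> a; rewrite -[RHS](cX (inl a)) [RHS]card_sum.
  have -> : #|[set j | inr j \in [set x in X | part x == inl a]]| = 0%N.
    by apply/eqP; rewrite cards_eq0; apply/eqP/setP => j; rewrite !inE andbF.
  by rewrite addn0; apply: eq_card => i; rewrite !inE.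
have ctt : forall b, #|tt b| = tz b.
  move=> b; have := cX (inr b); rewrite card_sum.
  have -> : #|[set i | inl i \in [set x in X | part x == inr b]]| = 0%N.
    by apply/eqP; rewrite cards_eq0; apply/eqP/setP => i; rewrite !inE andbF.
  rewrite add0n /= => h.
  have := cardsID [set j | inr j \in X] (Tb b).
  have -> : #|Tb b :&: [set j | inr j \in X]| = #|[set j | inr j \in [set x in X | part x == inr b]]|.
    by apply: eq_card => j; rewrite !inE memT andbC.
  have -> : #|Tb b :\: [set j | inr j \in X]| = #|tt b|.
    by apply: eq_card => j; rewrite !inE memT andbC.
  rewrite h; have := tzle b; nlia.
have ms : \bigcup_(a < m) ss a = [set i | inl i \in X].
  apply/setP => i; rewrite inE; apply/bigcupP/idP => [[a _]|iX]; first by rewrite inE => /andP [].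
  by exists (idxS i) => //; rewrite inE iX eqxx.
have mt : \bigcup_(b < n) tt b = [set j | inr j \notin X].
  apply/setP => j; rewrite inE; apply/bigcupP/idP => [[b _]|jX]; first by rewrite inE => /andP [].
  by exists (idxT j) => //; rewrite inE jX eqxx.
have cs : #|\bigcup_(a < m) ss a| = R.
  rewrite -hs ms; have := card_part_in idxS [set i | inl i \in X] setT.
  have -> : [set x in [set i | inl i \in X] | idxS x \in setT] = [set i | inl i \in X].
    by apply/setP => i; rewrite !inE andbT.
  move=> ->; rewrite (eq_bigl (fun a => true)) => [|a]; last by rewrite inE.
  apply: eq_bigr => a _; rewrite -css; apply: eq_card => i; by rewrite !inE.
have ct : #|\bigcup_(b < n) tt b| = R.
  rewrite -ht mt; have := card_part_in idxT [set j | inr j \notin X] setT.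
  have -> : [set x in [set j | inr j \notin X] | idxT x \in setT] = [set j | inr j \notin X].
    by apply/setP => j; rewrite !inE andbT.
  move=> ->; rewrite (eq_bigl (fun b => true)) => [|b]; last by rewrite inE.
  apply: eq_bigr => b _; rewrite -ctt; apply: eq_card => j; by rewrite !inE.
exists ss, tt; split; [|split].
- move=> a; split; last exact: css.
  by apply/subsetP => i; rewrite inE memS => /andP [].
- move=> b; split; last exact: ctt.
  by apply/subsetP => j; rewrite inE memT => /andP [].
have e : #|\bigcup_(b < n) tt b| = #|\bigcup_(a < m) ss a| by rewrite cs ct.
exists e; rewrite -row_free_unit /row_free rank_castmx.
have := rk_split G (X := X) (A := \bigcup_(a < m) ss a) (B := \bigcup_(b < n) tt b).
rewrite ms mt rX card_sum => h.
have h1 : forall i : S, (inl i \in X) = (i \in [set i0 | inl i0 \in X]) by move=> i; rewrite inE.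
have h2 : forall j : T, (inr j \in X) = (j \notin [set j0 | inr j0 \notin X]) by move=> j; rewrite inE negbK.
have {h1 h2}h := h h1 h2.
have e2 : #|~: [set j | inr j \notin X]| = #|[set j | inr j \in X]|.
  by apply: eq_card => j; rewrite !inE negbK.
rewrite e2 in h.
apply/eqP; move: h; set rr := \rank _; set a1 := #|[set i | inl i \in X]|; set b1 := #|[set j | inr j \in X]|.
nlia.
Qed.
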